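(* Let $B>0$, $\beta>0$, and $\mathcal{G}\subseteq\mathbb{R}^d$. Then $\mathcal{M}_{B,\beta}$ is $\max_{\boldsymbol g\in\mathcal{G}}\sum_{i=1}^d\log\left(1+\frac{1}{\beta+\mathrm{dist}(g_i,\mathcal{C}_B)}\right)$-differentially private on $\mathcal{G}$.
   Context: For $B>0$, $\mathrm{clip}\{g,B\}=\max\{-B,\min\{B,g\}\}$. The randomized compressor $\mathcal{M}_{B,\beta}:\mathbb{R}^d\to\{-1,1\}^d$ acts independently on each coordinate: $[\mathcal{M}_{B,\beta}]_i(\boldsymbol g)=1$ with probability $\frac{B+\beta+\mathrm{clip}\{g_i,B\}}{2B+2\beta}$ and $=-1$ otherwise, where $g_i$ is the $i$-th coordinate of $\boldsymbol g$. Let $\mathcal{C}_B=(-\infty,-B)\cup(B,\infty)$ and for $g\in\mathbb{R}$ let $\mathrm{dist}(g,\mathcal{C}_B)=\inf_{g'\in\mathcal{C}_B}|g-g'|$. A randomized algorithm $\mathcal{M}$ is $\epsilon$-differentially private on $\mathcal{G}$ if $\Pr[\mathcal{M}(x)\in\mathcal{S}]\le e^{\epsilon}\Pr[\mathcal{M}(y)\in\mathcal{S}]$ for all subsets $\mathcal{S}$ of its range and all $x,y\in\mathcal{G}$ with $\|x-y\|_1\le1$. *)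

(* Defs.v *)
From HB Require Import structures.
From mathcomp Require Import all_boot all_order all_algebra.
From mathcomp Require Import all_classical all_reals all_analysis.
Set Implicit Arguments. Unset Strict Implicit. Unset Printing Implicit Defensive.
Import Order.TTheory GRing.Theory Num.Theory.
Local Open Scope classical_set_scope.
Local Open Scope ring_scope.

Definition clip {R : realType} (g B : R) : R := Num.max (- B) (Num.min B g).

Definition prob_plus {R : realType} (B beta g : R) : R :=
  (B + beta + clip g B) / (2 * B + 2 * beta).

(* Outputs in {-1,1}^d are encoded as {ffun 'I_d -> bool}, true <-> +1. *)
Definition output d := {ffun 'I_d -> bool}.

(* Pr[M_{B,beta}(g) = s]: coordinates are independent. *)
Definition M_pmf {R : realType} (d : nat) (B beta : R) (g : 'I_d -> R)
  (s : output d) : R :=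
  \prod_(i < d) (if s i then prob_plus B beta (g i) else 1 - prob_plus B beta (g i)).

Definition M_prob {R : realType} (d : nat) (B beta : R) (g : 'I_d -> R)
  (S : {set output d}) : R :=
  \sum_(s in S) M_pmf B beta g s.

Definition C_set {R : realType} (B : R) : set R := [set x | x < - B \/ B < x].

Definition dist_C {R : realType} (B g : R) : R :=
  inf [set `|g - g'| | g' in C_set B].

Definition l1_dist {R : realType} (d : nat) (x y : 'I_d -> R) : R :=
  \sum_(i < d) `|x i - y i|.

Definition M_is_DP {R : realType} (d : nat) (B beta : R) (eps : R)
  (G : set ('I_d -> R)) : Prop :=
  forall (S : {set output d}) (x y : 'I_d -> R), G x -> G y ->
    l1_dist x y <= 1 ->
    M_prob B beta x S <= expR eps * M_prob B beta y S.

Definition priv_cost {R : realType} (d : nat) (B beta : R) (g : 'I_d -> R) : R :=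
  \sum_(i < d) ln (1 + (beta + dist_C B (g i))^-1).

(* max over G, read as the supremum (equals the max whenever it is attained) *)
Definition priv_budget {R : realType} (d : nat) (B beta : R)
  (G : set ('I_d -> R)) : R :=
  sup [set priv_cost B beta g | g in G].

(* Main.v *)
Require Import Defs.
From HB Require Import structures.
From mathcomp Require Import all_boot all_order all_algebra.
From mathcomp Require Import all_classical all_reals all_analysis.
From mathcomp Require Import ring lra.
Import Order.TTheory GRing.Theory Num.Theory.
Local Open Scope classical_set_scope.
Local Open Scope ring_scope.
Set Implicit Arguments.

Lemma clip_spec {R : realType} (B g : R) : 0 < B ->
  (clip g B = -B /\ g <= -B) \/ (clip g B = g /\ -B <= g /\ g <= B)
  \/ (clip g B = B /\ B <= g).
Proof.
move=> hB; rewrite /clip.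
case: (real_leP (num_real B) (num_real g)) => hg.
  case: (real_leP (num_real (-B)) (num_real B)) => h; last lra.
  by right; right.
case: (real_leP (num_real (-B)) (num_real g)) => h2.
  by right; left; split=>//; lra.
by left; split=>//; lra.
Qed.

Lemma dist_ge0 {R : realType} (B g : R) : 0 <= dist_C B g.
Proof.
apply: lb_le_inf.
  by exists `|g - (B + 1 + `|B|)|, (B + 1 + `|B|) => //; right; rewrite /=; have := normr_ge0 B; lra.
by move=> _ [g' _ <-].
Qed.

Lemma dist_le {R : realType} (B g : R) : 0 < B ->
  dist_C B g <= B - `|clip g B|.
Proof.
move=> hB; apply/ler_addgt0Pr => e he.
have hlb : has_lbound [set `|g - g'| | g' in C_set B].
  by exists 0 => _ [g' _ <-].
have key : forall g' c, C_set B g' -> `|g - g'| <= c ->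
  dist_C B g <= c.
  move=> g' c hg' h; apply: le_trans h; apply: ge_inf => //; by exists g'.
case: (clip_spec B g hB) => [[-> ?]|[[-> [? ?]]|[-> ?]]].
- apply: (key (g - e)); first by left; lra.
  have -> : g - (g - e) = e by ring.
  rewrite (gtr0_norm he) normrN (gtr0_norm hB); lra.
- have [hg|hg] := leP 0 g.
    apply: (key (B + e)); first by right; lra.
    rewrite (ger0_norm hg) ler0_norm; lra.
  apply: (key (- B - e)); first by left; lra.
  rewrite (ltr0_norm hg) ger0_norm; lra.
- apply: (key (g + e)); first by right; lra.
  rewrite (gtr0_norm hB) ltr0_norm; lra.
Qed.

Lemma coord_bound {R : realType} (B beta x y : R) (b : bool) :
  0 < B -> 0 < beta -> `|x - y| <= 1 ->
  0 <= (if b then prob_plus B beta x else 1 - prob_plus B beta x) <=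
  (1 + (beta + dist_C B y)^-1) *
  (if b then prob_plus B beta y else 1 - prob_plus B beta y).
Proof.
move=> hB hb hxy.
have hd0 := dist_ge0 B y.
have hdl := dist_le B y hB.
have hD : 0 < 2 * B + 2 * beta by lra.
have hxy1 : x - y <= 1 by have := ler_norm (x - y); lra.
have hxy2 : y - x <= 1 by have := ler_norm (y - x); rewrite distrC; lra.
set a := (beta + dist_C B y)^-1.
have ha : a * (beta + dist_C B y) = 1 by rewrite /a mulVf //; lra.
have ha0 : 0 < a by rewrite /a invr_gt0; lra.
have [hc1 hc2] : clip x B - clip y B <= 1 /\ clip y B - clip x B <= 1.
  case: (clip_spec B x hB) => [[-> ?]|[[-> ?]|[-> ?]]];
  case: (clip_spec B y hB) => [[-> ?]|[[-> ?]|[-> ?]]]; lra.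
have hny : `|clip y B| <= B by case: (clip_spec B y hB) => [[-> ?]|[[-> ?]|[-> ?]]];
  [rewrite normrN gtr0_norm| rewrite ler_norml; lra| rewrite gtr0_norm].
have hcy1 : clip y B <= `|clip y B| := ler_norm _.
have hcy2 : - clip y B <= `|clip y B| by rewrite -normrN; exact: ler_norm.
have hcx : -B <= clip x B <= B by
  case: (clip_spec B x hB) => [[-> ?]|[[-> ?]|[-> ?]]]; lra.
rewrite /prob_plus; case: b.
- apply/andP; split.
    apply: divr_ge0; lra.
  rewrite mulrA ler_pM2r ?invr_gt0 //.
  have : 1 <= a * (B + beta + clip y B).
    rewrite -ha ler_pM2l //; lra.
  nra.
- have e1 : forall z, 1 - (B + beta + z) / (2 * B + 2 * beta) = (B + beta - z) / (2 * B + 2 * beta).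
    by move=> z; field; lra.
  rewrite !e1; apply/andP; split.
    apply: divr_ge0; lra.
  rewrite mulrA ler_pM2r ?invr_gt0 //.
  have : 1 <= a * (B + beta - clip y B).
    rewrite -ha ler_pM2l //; lra.
  nra.
Qed.

Theorem theorem3 (R : realType) (d : nat) (B beta : R) (G : set ('I_d -> R)) :
  0 < B -> 0 < beta ->
  M_is_DP B beta (priv_budget B beta G) G.
Proof.
move=> hB hb S x y Gx Gy hxy.
have hi : forall i, `|x i - y i| <= 1.
  move=> i; apply: le_trans hxy; rewrite /l1_dist (bigD1 i) //= lerDl.
  by apply: sumr_ge0 => j _; exact: normr_ge0.
have hcost : priv_cost B beta y <= priv_budget B beta G.
  apply: ub_le_sup; last by exists y.
  exists (d%:R * beta^-1) => _ [g _ <-].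
  rewrite /priv_cost -[d in d%:R]card_ord -sum1_card natr_sum mulr_suml.
  apply: ler_sum => i _; rewrite mul1r.
  have h0 := dist_ge0 B (g i).
  apply: le_trans (le_ln1Dx _) _.
    have : 0 < (beta + dist_C B (g i))^-1 by rewrite invr_gt0; lra.
    lra.
  rewrite lef_pV2 ?posrE; lra.
have hprod : \prod_(i < d) (1 + (beta + dist_C B (y i))^-1) =
             expR (priv_cost B beta y).
  rewrite /priv_cost expR_sum; apply: eq_bigr => i _.
  rewrite lnK // posrE.
  have h0 := dist_ge0 B (y i).
  have : 0 < (beta + dist_C B (y i))^-1 by rewrite invr_gt0; lra.
  lra.
rewrite /M_prob mulr_sumr; apply: ler_sum => s _.
apply: (@le_trans _ _ (expR (priv_cost B beta y) * M_pmf B beta y s)).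
  rewrite -hprod /M_pmf -big_split /=.
  apply: ler_prod => i _; exact: coord_bound.
rewrite ler_wpM2r // ?ler_expR //.
have hi' : forall i, `|y i - y i| <= 1 by move=> i; rewrite subrr normr0 ler01.
rewrite /M_pmf; apply: prodr_ge0 => i _.
have /andP[h _] := coord_bound B beta (y i) (y i) (s i) hB hb (hi' i) ; exact: h.
Qed.
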